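(* For all $n\geq 2$ and $0\leq k\leq n-1$, $$Q_{n,k}(x,t)-Q_{n,k}(x-t-1,t)=(t+1)(n+k-1)\,Q_{n-1,k}(x,t).$$
   Context: Define polynomials $Q_m(x,y,z,t)$ by $Q_1=1$ and $Q_{m+1}=[x+mz+(y+t)(m+y\partial_y)]Q_m$ for $m\ge1$ ($\partial_y$ the partial derivative in $y$), and define $Q_{m,k}(x,t)$ by $Q_m(x,y,1,t)=\sum_{k=0}^{m-1}Q_{m,k}(x,t)y^k$, with the convention $Q_{m,k}=0$ if $k<0$ or $k\geq m$. *)

(* Defs.v *)
From HB Require Import structures.
From mathcomp Require Import all_boot all_order all_algebra.
From mathcomp Require Import mpoly.
Set Implicit Arguments. Unset Strict Implicit. Unset Printing Implicit Defensive.
Import GRing.Theory.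
Local Open Scope ring_scope.

(* Coefficient ring of Q_m(x,y,z,t): polynomials in y (outer univariate
   variable 'X) with coefficients in int[x,z,t] = {mpoly int[3]},
   where 'X_0 = x, 'X_1 = z, 'X_2 = t. *)
Definition Rxzt := {mpoly int[3]}.
Definition vx : Rxzt := 'X_(@Ordinal 3 0 isT).
Definition vz : Rxzt := 'X_(@Ordinal 3 1 isT).
Definition vt : Rxzt := 'X_(@Ordinal 3 2 isT).

Definition Qstep (m : nat) (Q : {poly Rxzt}) : {poly Rxzt} :=
  (vx + m%:R * vz)%:P * Q + ('X + vt%:P) * (m%:R *: Q + 'X * Q^`()).

(* Qrec m = Q_{m+1}. *)
Fixpoint Qrec (m : nat) : {poly Rxzt} :=
  if m is m'.+1 then Qstep m (Qrec m') else 1.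

(* Q m = Q_m for m >= 1 (Q 0 is a dummy value equal to Q_1, never used). *)
Definition Q (m : nat) : {poly Rxzt} := Qrec m.-1.

(* Q_{m,k}(x,t) in int[x,t] = {mpoly int[2]} ('X_0 = x, 'X_1 = t):
   coefficient of y^k in Q_m(x,y,1,t).  It is automatically 0 for k >= m. *)
Definition X2 : {mpoly int[2]} := 'X_(@Ordinal 2 0 isT).
Definition T2 : {mpoly int[2]} := 'X_(@Ordinal 2 1 isT).

Definition Qmk (m k : nat) : {mpoly int[2]} :=
  (Q m)`_k \mPo [tuple X2; 1; T2].

Definition shift_x (p : {mpoly int[2]}) : {mpoly int[2]} :=
  p \mPo [tuple X2 - T2 - 1; T2].

(* Main.v *)
Require Import Defs.
From HB Require Import structures.
From mathcomp Require Import all_boot all_order all_algebra.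
From mathcomp Require Import mpoly ring.
Local Open Scope ring_scope.
Import GRing.Theory.
Lemma auxR j (P : {poly Rxzt}) k : (j%:R *: P + 'X * P^`())`_k = (j+k)%N%:R * P`_k.
Proof.
rewrite coefD coefZ coefXM; case: k => [|k] /=; first by rewrite addr0 addn0.
rewrite coef_deriv -mulr_natl natrD mulrDl.
ring.
Qed.

Lemma Qstep_coef j P k : (Qstep j P)`_k =
  (vx + j%:R*vz) * P`_k + vt * ((j+k)%N%:R * P`_k)
  + (if k is k'.+1 then (j+k')%N%:R * P`_k' else 0).
Proof.
rewrite /Qstep !mulrDl !coefD coefCM coefXM coefCM !auxR.
case: k => [|k] /=.
all: rewrite ?auxR; ring.

Qed.

Lemma Qmk_rec j k : Qmk j.+2 k = (X2 + j.+1%:R + T2 * (j.+1+k)%N%:R) * Qmk j.+1 k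
  + (if k is k'.+1 then (j.+1 + k')%N%:R * Qmk j.+1 k' else 0).
Proof.
rewrite /Qmk /Q /= Qstep_coef.
rewrite !(rmorphD, rmorphM, rmorph_nat) /=.
rewrite /vx /vz /vt !comp_mpolyXU /=.
case: k => [|k] /=; last rewrite rmorphM rmorph_nat /=; rewrite ?rmorph0; ring.
Qed.

Lemma shD a b : shift_x (a + b) = shift_x a + shift_x b.
Proof. exact: rmorphD. Qed.
Lemma shM a b : shift_x (a * b) = shift_x a * shift_x b.
Proof. exact: rmorphM. Qed.
Lemma shN n : shift_x n%:R = n%:R.
Proof. exact: rmorph_nat. Qed.
Lemma sh0 : shift_x 0 = 0.
Proof. exact: rmorph0. Qed.
Lemma shX : shift_x X2 = X2 - T2 - 1.
Proof. by rewrite /shift_x /X2 comp_mpolyXU. Qed.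
Lemma shT : shift_x T2 = T2.
Proof. by rewrite /shift_x /T2 comp_mpolyXU. Qed.

Lemma Qmk1 k : Qmk 1 k = (k == 0%N)%:R.
Proof. by rewrite /Qmk /Q /= coef1 rmorph_nat. Qed.

Lemma main m : forall k, Qmk m.+2 k - shift_x (Qmk m.+2 k)
   = (T2 + 1) * (m.+1 + k)%N%:R * Qmk m.+1 k.
Proof.
elim: m => [|m IH] k.
  rewrite Qmk_rec; case: k => [|[|k]] /=; rewrite !Qmk1 /=;
  rewrite ?(shD, shM, shN, sh0, shX, shT); ring.
rewrite Qmk_rec.
have HB := Qmk_rec m k.
have IHk := IH k.
case: k HB IHk => [|k] /= HB IHk.
  rewrite ?(shD, shM, shN, sh0, shX, shT).
  have -> : shift_x (Qmk m.+2 0) = Qmk m.+2 0 - (T2 + 1) * (m.+1 + 0)%N%:R * Qmk m.+1 0.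
    by rewrite -IHk opprB addrC subrK.
  rewrite HB; rewrite !natrD; ring.
have IHk' := IH k.
rewrite ?(shD, shM, shN, sh0, shX, shT).
have -> : shift_x (Qmk m.+2 k.+1) = Qmk m.+2 k.+1 - (T2 + 1) * (m.+1 + k.+1)%N%:R * Qmk m.+1 k.+1.
  by rewrite -IHk opprB addrC subrK.
have -> : shift_x (Qmk m.+2 k) = Qmk m.+2 k - (T2 + 1) * (m.+1 + k)%N%:R * Qmk m.+1 k.
  by rewrite -IHk' opprB addrC subrK.
rewrite HB; rewrite !natrD; ring.
Qed.

Theorem lemma6p2 (n k : nat) (hn : (2 <= n)%N) (hk : (k <= n - 1)%N) :
  Qmk n k - shift_x (Qmk n k)
  = (T2 + 1) * (n + k - 1)%:R * Qmk (n - 1) k.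
Proof.
case: n hn hk => [|[|m]] // _ _.
have -> : (m.+2 + k - 1)%N = (m.+1 + k)%N by rewrite addSn subn1.
rewrite subn1 /=; exact: main.
Qed.
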